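(* Let $X$ be a Banach space over $\mathbb K\in\{\mathbb R,\mathbb C\}$, $(S,\Sigma,\mu)$ a measure space, and $f,g:S\to X$ strongly measurable functions such that for each $x^*\in X^*$ one has $|\langle g,x^*\rangle|\le|\langle f,x^*\rangle|$ $\mu$-a.e. Then there exists a $\Sigma$-measurable function $a:S\to\mathbb K$ with $\|a\|_\infty\le1$ and $g=af$ $\mu$-a.e. *)

(* Defs.v *)
From mathcomp Require Import all_boot all_order all_algebra.
From mathcomp Require Import all_classical all_reals all_analysis.
From mathcomp Require Import complex.
Set Implicit Arguments. Unset Strict Implicit. Unset Printing Implicit Defensive.
Import Order.TTheory GRing.Theory Num.Theory.
Import numFieldNormedType.Exports.
Local Open Scope classical_set_scope.
Local Open Scope ring_scope.

Inductive scalar_field := RealScalars | ComplexScalars.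

Definition Kof (R : realType) (c : scalar_field) : numFieldType :=
  match c with
  | RealScalars => (R : numFieldType)
  | ComplexScalars => (R[i] : numFieldType)
  end.

Definition borel_measurable d (S : measurableType d) (T : topologicalType)
  (a : S -> T) : Prop :=
  forall U : set T, open U -> measurable (a @^-1` U).

Definition simple_fun d (S : measurableType d) (X : Type) (phi : S -> X) : Prop :=
  finite_set (range phi) /\ forall x : X, measurable (phi @^-1` [set x]).

Definition strongly_measurable d (S : measurableType d) (K : numFieldType)
  (X : normedModType K) (f : S -> X) : Prop :=
  exists phi : nat -> S -> X,
    (forall n, simple_fun (phi n)) /\
    (forall s, (fun n => phi n s) @ \oo --> f s).

(* Main.v *)
From HB Require Import structures.
Require Import Defs.
From mathcomp Require Import all_boot all_order all_algebra.
From mathcomp Require Import all_classical all_reals all_analysis.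
From mathcomp Require Import complex.
From mathcomp Require Import ring lra.
Set Implicit Arguments. Unset Strict Implicit. Unset Printing Implicit Defensive.
Import Order.TTheory GRing.Theory Num.Theory.
Import numFieldNormedType.Exports.
Local Open Scope classical_set_scope.
Local Open Scope ring_scope.
Section HBcore.
Variables (R : realType) (V : zmodType) (sc : R -> V -> V).
Hypothesis scDr : forall a x y, sc a (x + y) = sc a x + sc a y.
Hypothesis scDl : forall a b x, sc (a + b) x = sc a x + sc b x.
Hypothesis scA : forall a b x, sc a (sc b x) = sc (a * b) x.
Hypothesis sc1 : forall x, sc 1 x = x.
Variable p : V -> R.
Hypothesis pD : forall x y, p (x + y) <= p x + p y.
Hypothesis pZ : forall t x, 0 <= t -> p (sc t x) = t * p x.

Lemma sc0 x : sc 0 x = 0.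
Proof.
have h := scDl 0 0 x; rewrite addr0 in h.
by apply: (addrI (sc 0 x)); rewrite addr0 -h.
Qed.

Lemma scN1 x : sc (-1) x = - x.
Proof.
have h := scDl 1 (-1) x; rewrite subrr sc0 sc1 in h.
by rewrite -[LHS]add0r -(addNr x) -addrA -h addr0.
Qed.

Lemma scx0 a : sc a 0 = 0.
Proof.
have h := scDr a 0 0; rewrite addr0 in h.
by apply: (addrI (sc a 0)); rewrite addr0 -h.
Qed.

Lemma p0 : p 0 = 0.
Proof. by have := pZ 0 (lexx 0); rewrite sc0 mul0r; apply. Qed.

Definition good (G : set (V * R)) :=
  [/\ G (0, 0),
      (forall x a y b, G (x, a) -> G (y, b) -> G (x + y, a + b)),
      (forall t x a, G (x, a) -> G (sc t x, t * a)),
      (forall x a b, G (x, a) -> G (x, b) -> a = b) &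
      (forall x a, G (x, a) -> a <= p x)].

Section Ext.
Variables (G : set (V * R)) (gG : good G) (x0 : V).
Hypothesis nx0 : forall a, ~ G (x0, a).

Definition Es := [set z | exists y b, G (y, b) /\ z = b - p (y - x0)].

Lemma Es_ub x a y b : G (x, a) -> G (y, b) -> b - p (y - x0) <= p (x + x0) - a.
Proof.
case: gG => _ Gadd _ _ Gp Gxa Gyb.
have := Gp _ _ (Gadd _ _ _ _ Gxa Gyb).
have : p (x + y) <= p (x + x0) + p (y - x0).
  by have := pD (x + x0) (y - x0); rewrite addrACA subrr addr0.
lra.
Qed.

Definition cc := sup Es.

Lemma Es_has : has_sup Es.
Proof.
case: gG => G00 _ _ _ _; split; first by exists (0 - p (0 - x0)), 0, 0.
exists (p (0 + x0) - 0) => z [y [b [Gyb ->]]]; exact: Es_ub Gyb.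
Qed.

Lemma cc_ge y b : G (y, b) -> b - p (y - x0) <= cc.
Proof. by move=> Gyb; apply: sup_upper_bound Es_has _ _; exists y, b. Qed.

Lemma cc_le x a : G (x, a) -> cc <= p (x + x0) - a.
Proof.
move=> Gxa; apply: ge_sup; first by case: Es_has.
by move=> z [y [b [Gyb ->]]]; exact: Es_ub Gyb.
Qed.

Definition Gext := [set xa | exists x a t, G (x, a) /\ xa = (x + sc t x0, a + t * cc)].

Lemma Gext_good : good Gext.
Proof.
case: gG => G00 Gadd Gsc Gfun Gp; rewrite /Gext; split.
- by exists 0, 0, 0; split => //; rewrite sc0 mul0r !addr0.
- move=> _ _ _ _ [x [a [t [Gxa /pair_equal_spec[-> ->]]]]] [y [b [s [Gyb /pair_equal_spec[-> ->]]]]].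
  exists (x + y), (a + b), (t + s); split; first exact: Gadd.
  by rewrite scDl mulrDl; congr (_, _); rewrite -!addrA; congr (_ + _);
     rewrite addrC -!addrA; congr (_ + _); rewrite addrC.
- move=> r _ _ [x [a [t [Gxa /pair_equal_spec[-> ->]]]]].
  exists (sc r x), (r * a), (r * t); split; first exact: Gsc.
  by rewrite scDr scA mulrDr mulrA.
- move=> _ a1 a2 [x [a [t [Gxa /pair_equal_spec[-> ->]]]]] [y [b [s [Gyb /pair_equal_spec[Exy ->]]]]].
  have [ets|nts] := eqVneq t s.
    subst s; move/addIr: Exy => Exy; subst y.
    by rewrite (Gfun _ _ _ Gxa Gyb).
  exfalso.
  have Gd := Gadd _ _ _ _ Gxa (Gsc (-1) _ _ Gyb).
  rewrite scN1 in Gd.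
  have E1 : x - y = sc (s - t) x0.
    rewrite scDl -[in RHS](mulN1r t) -scA scN1.
    by rewrite -[x](addrK (sc t x0)) Exy addrAC [y + _]addrC addrK.
  have := Gsc ((s - t)^-1) _ _ Gd; rewrite E1 scA mulVf ?sc1; first exact: nx0.
  by rewrite subr_eq0 eq_sym.
- move=> _ _ [x [a [t [Gxa /pair_equal_spec[-> ->]]]]].
  have [tlt0|tgt0|t0] := ltgtP t 0; last first.
  + by subst t; rewrite sc0 mul0r !addr0; exact: Gp.
  + have Gx := Gsc (t^-1) _ _ Gxa.
    have := cc_le Gx.
    have -> : sc t^-1 x + x0 = sc t^-1 (x + sc t x0).
      by rewrite scDr scA mulVf ?sc1 // gt_eqF.
    rewrite pZ; last by rewrite invr_ge0 ltW.
    set P := p _ => h.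
    have : t * cc <= t * (t^-1 * P - t^-1 * a) by rewrite ler_pM2l.
    by rewrite mulrBr !mulrA mulfV ?gt_eqF // !mul1r; lra.
  + have s0 : 0 < - t by rewrite oppr_gt0.
    have Gx := Gsc ((- t)^-1) _ _ Gxa.
    have := cc_ge Gx.
    have -> : sc (- t)^-1 x - x0 = sc (- t)^-1 (x + sc t x0).
      rewrite scDr scA invrN mulNr mulVf ?lt_eqF // -scN1; congr (_ + _).
    rewrite pZ; last by rewrite invr_ge0 ltW.
    set P := p _ => h.
    have : - t * ((- t)^-1 * a - (- t)^-1 * P) <= - t * cc by rewrite ler_pM2l.
    by rewrite mulrBr !mulrA mulfV ?gt_eqF // !mul1r; lra.
Qed.

Lemma Gext_sup : G `<` Gext.
Proof.
split.
  by move=> [x a] Gxa; exists x, a, 0; split => //; rewrite sc0 mul0r !addr0.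
move=> H; have : Gext (x0, cc).
  by exists 0, 0, 1; split; [case: gG| rewrite sc1 add0r mul1r add0r].
by move/H; exact: nx0.
Qed.
End Ext.

Lemma HB_graph (G0 : set (V * R)) : good G0 ->
  exists F : V -> R,
    [/\ forall x y, F (x + y) = F x + F y,
        forall t x, F (sc t x) = t * F x,
        forall x a, G0 (x, a) -> F x = a &
        forall x, F x <= p x].
Proof.
move=> gG0.
pose P := [set G | G = set0 \/ (G0 `<=` G /\ good G)].
have goodP G z : P G -> G z -> G0 `<=` G /\ good G.
  by case=> [->//|//].
have [|A [PA Amax]] := @Zorn_bigcup _ P.
  move=> F FP Ftot.
  have [[z [G FG Gz]]|nU] := pselect (exists z, (\bigcup_(X in F) X) z); last first.
    left; apply/seteqP; split => // z Uz; exfalso; apply: nU; by exists z.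
  right.
  have gF H w : F H -> H w -> good H by move=> FH Hw; case: (goodP H w (FP _ FH) Hw).
  have two H1 H2 w1 w2 : F H1 -> F H2 -> H1 w1 -> H2 w2 ->
      exists H, [/\ F H, H w1 & H w2].
    move=> F1 F2 h1 h2; have [S12|S21] := Ftot _ _ F1 F2.
      by exists H2; split => //; exact: S12.
    by exists H1; split => //; exact: S21.
  split.
    by move=> w G0w; exists G => //; case: (goodP G z (FP _ FG) Gz) => /(_ _ G0w).
  split.
  - by exists G => //; case: (gF G z FG Gz).
  - move=> x a y b [H1 F1 h1] [H2 F2 h2].
    have [H [FH k1 k2]] := two _ _ _ _ F1 F2 h1 h2.
    by exists H => //; case: (gF H _ FH k1) => _ + _ _ _; apply.
  - move=> t x a [H FH h]; exists H => //.
    by case: (gF H _ FH h) => _ _ + _ _; apply.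
  - move=> x a b [H1 F1 h1] [H2 F2 h2].
    have [H [FH k1 k2]] := two _ _ _ _ F1 F2 h1 h2.
    by case: (gF H _ FH k1) => _ _ _ Hf _; exact: Hf k1 k2.
  - move=> x a [H FH h].
    by case: (gF H _ FH h) => _ _ _ _; apply.
have [AG0 gA] : G0 `<=` A /\ good A.
  case: PA => // A0; exfalso.
  have h : A `<` G0.
    rewrite A0; split => //; move/(_ (0, 0)).
    by case: gG0 => G00 _ _ _ _ /(_ G00).
  by apply: (Amax G0 h); rewrite /P /=; right; split.
have tot x : exists a, A (x, a).
  apply: contrapT => nx.
  have nx' : forall a, ~ A (x, a) by move=> a Aa; apply: nx; exists a.
  have [sub _] := Gext_sup gA nx'.
  apply: (Amax (Gext A x) (Gext_sup gA nx')); rewrite /P /=; right; split.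
    by move=> w /AG0; apply: sub.
  exact: Gext_good.
have [F FA] : {F : V -> R | forall x, A (x, F x)}.
  by exists (fun x => xget 0 [set a | A (x, a)]) => x; case: xgetP => //;
     have [a Aa] := tot x => /(_ a).
case: gA => A00 Aadd Asc Afun Ap.
exists F; split.
- by move=> x y; apply: Afun (FA _) _; apply: Aadd; apply: FA.
- by move=> t x; apply: Afun (FA _) _; apply: Asc; apply: FA.
- by move=> x a /AG0 Aa; apply: Afun (FA _) Aa.
- by move=> x; apply: Ap; apply: FA.
Qed.

Lemma HB_line (M : set V) (c2 : V) (r : R) :
  M 0 -> (forall m1 m2, M m1 -> M m2 -> M (m1 + m2)) ->
  (forall t m, M m -> M (sc t m)) -> (forall x, 0 <= p x) ->
  0 <= r -> (forall m, M m -> r <= p (c2 + m)) ->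
  exists F : V -> R,
    [/\ forall x y, F (x + y) = F x + F y,
        forall t x, F (sc t x) = t * F x,
        F c2 = r, forall m, M m -> F m = 0 &
        forall x, F x <= p x].
Proof.
move=> M0 MD MZ pge0 r0 Mr.
pose G0 := [set xa | exists m t, M m /\ xa = (m + sc t c2, t * r)].
have gG0 : good G0.
  split.
  - by exists 0, 0; rewrite sc0 addr0 mul0r.
  - move=> _ _ _ _ [m1 [t1 [M1 /pair_equal_spec[-> ->]]]]
                    [m2 [t2 [M2 /pair_equal_spec[-> ->]]]].
    exists (m1 + m2), (t1 + t2); split; first exact: MD.
    by rewrite scDl mulrDl addrACA.
  - move=> s _ _ [m [t [Mm /pair_equal_spec[-> ->]]]].
    exists (sc s m), (s * t); split; first exact: MZ.
    by rewrite scDr scA mulrA.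
  - move=> x a b [m1 [t1 [M1 /pair_equal_spec[E1 ->]]]]
                  [m2 [t2 [M2 /pair_equal_spec[E2 ->]]]].
    have [->//|nt] := eqVneq t1 t2.
    have E : m1 - m2 = sc (t2 - t1) c2.
      rewrite scDl -(mulN1r t1) -scA scN1.
      have : m1 + sc t1 c2 = m2 + sc t2 c2 by rewrite -E1 -E2.
      move/(congr1 (fun z => z - sc t1 c2 - m2)).
      by rewrite addrK addrAC [m2 + _]addrC addrK.
    have Mm : M (sc (- (t2 - t1)^-1) (m1 - m2)).
      by apply: (MZ); apply: (MD _ _ M1); rewrite -scN1; exact: MZ.
    have := Mr _ Mm.
    rewrite E scA mulNr mulVf ?subr_eq0 1?eq_sym // scN1 subrr p0 => rle0.
    have -> : r = 0 by apply/eqP; rewrite eq_le rle0 r0.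
    by rewrite !mulr0.
  - move=> _ _ [m [t [Mm /pair_equal_spec[-> ->]]]].
    have [t0|t0] := leP t 0.
      by apply: le_trans (pge0 _); rewrite mulr_le0_ge0.
    have -> : m + sc t c2 = sc t (c2 + sc t^-1 m).
      by rewrite scDr scA mulfV ?gt_eqF // sc1 addrC.
    rewrite pZ; last exact: ltW.
    rewrite ler_pM2l //; apply: (Mr); exact: MZ.
have [F [FD FZ FG0 Fp]] := HB_graph gG0.
exists F; split => //.
- by rewrite (FG0 c2 r) //; exists 0, 1; rewrite sc1 add0r mul1r.
- by move=> m Mm; rewrite (FG0 m 0) //; exists m, 0; rewrite sc0 addr0 mul0r.
Qed.
End HBcore.

Lemma mklin (K : numFieldType) (X : normedModType K) (f : X -> K) :
  linear f -> exists xs : {linear X -> K}, forall x, xs x = f x.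
Proof.
move=> lf.
pose xs : {linear X -> K} := HB.pack f (GRing.isLinear.Build K X K *:%R f lf).
by exists xs.
Qed.

Definition HBP (K : numFieldType) (X : normedModType K) :=
  forall (c1 c2 : X) (r : K), 0 < r -> (forall k : K, r <= `|c2 - k *: c1|) ->
  exists xs : {linear X -> K},
    (forall x, `|xs x| <= `|x|) /\ xs c1 = 0 /\ r <= `|xs c2|.

Lemma HBP_real (R : realType) (X : normedModType R) : HBP X.
Proof.
move=> c1 c2 r r0 Hr.
have := @HB_line R X *:%R (fun a x y => scalerDr a x y)
  (fun a b x => scalerDl x a b) (fun a b x => scalerA a b x) (fun x => scale1r x)
  (fun x : X => `|x|) (fun x y => ler_normD x y) _ [set k *: c1 | k in setT] c2 r.
case.
- by move=> t x t0; rewrite normrZ ger0_norm.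
- by exists 0 => //; rewrite scale0r.
- by move=> _ _ [a _ <-] [b _ <-]; exists (a + b) => //; rewrite scalerDl.
- by move=> t _ [a _ <-]; exists (t * a) => //; rewrite scalerA.
- by move=> x; exact: normr_ge0.
- exact: ltW.
- by move=> _ [k _ <-]; have := Hr (- k); rewrite scaleNr opprK.
move=> F [FD FZ Fc2 FM Fp].
have lF : linear F by move=> a x y; rewrite FD FZ.
have [xs xsE] := mklin lF.
exists xs; split; [|split].
- move=> x; rewrite xsE ler_norml Fp andbT.
  have := Fp (- x); rewrite normrN -scaleN1r FZ mulN1r.
  by rewrite lerNl.
- by rewrite xsE -[c1]scale1r FM //; exists 1.
- by rewrite xsE Fc2 ger0_norm // ltW.
Qed.

Section ComplexPart.
Local Open Scope complex_scope.
Local Notation Re := complex.Re.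
Local Notation Im := complex.Im.
Section C.
Variable R : realType.
Lemma ReD (x y : R[i]) : Re (x + y) = Re x + Re y. Proof. by case: x => a b; case: y => c d /=. Qed.
Lemma ImD (x y : R[i]) : Im (x + y) = Im x + Im y. Proof. by case: x => a b; case: y => c d /=. Qed.
Lemma ReM (x y : R[i]) : Re (x * y) = Re x * Re y - Im x * Im y. Proof. by case: x => a b; case: y => c d /=. Qed.
Lemma ImM (x y : R[i]) : Im (x * y) = Re x * Im y + Im x * Re y. Proof. by case: x => a b; case: y => c d /=; ring. Qed.
Lemma ReC (t : R) : Re t%:C = t. Proof. by []. Qed.
Lemma ImC (t : R) : Im t%:C = 0. Proof. by []. Qed.
Lemma Rei : Re 'i = 0 :> R. Proof. by []. Qed.
Lemma Imi : Im 'i = 1 :> R. Proof. by []. Qed.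
Lemma ReN (x : R[i]) : Re (- x) = - Re x. Proof. by case: x => a b /=. Qed.
Lemma ImN (x : R[i]) : Im (- x) = - Im x. Proof. by case: x => a b /=. Qed.
Lemma cplx_eq (x y : R[i]) : Re x = Re y -> Im x = Im y -> x = y.
Proof. by case: x; case: y => /= a b c d -> ->. Qed.
Lemma ge0_real (z : R[i]) : 0 <= z -> z = (Re z)%:C.
Proof. by move=> z0; apply: cplx_eq => //=; rewrite (ger0_Im z0). Qed.
End C.

Section CHB.
Variable R : realType.
Variable X : normedModType R[i].

Lemma normX_real (x : X) : `|x| = (Re `|x|)%:C.
Proof. exact/ge0_real/normr_ge0. Qed.

Lemma HBP_complex : HBP X.
Proof.
move=> c1 c2 r r0 Hr.
have r0' : 0 <= Re r by move: (ltW r0); rewrite lecE => /andP[].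
have := @HB_line R X (fun t x => t%:C *: x) (fun a x y => scalerDr a%:C x y)
  (fun a b x => etrans (f_equal (fun k => k *: x) (rmorphD _ a b)) (scalerDl x a%:C b%:C)) _ (fun x => scale1r x)
  (fun x : X => Re `|x|) _ _ [set k *: c1 | k in setT] c2 (Re r).
case.
- by move=> a b x /=; rewrite scalerA -rmorphM.
- move=> x y /=; have := ler_normD x y; rewrite lecE => /andP[_].
  by rewrite ReD.
- move=> t x t0 /=; rewrite normrZ ger0_norm ?ler0c //.
  by rewrite ReM /= mul0r subr0.
- by exists 0 => //; rewrite scale0r.
- by move=> _ _ [a _ <-] [b _ <-]; exists (a + b) => //; rewrite scalerDl.
- by move=> t _ [a _ <-]; exists (t%:C * a) => //; rewrite scalerA.
- by move=> x; have := normr_ge0 x; rewrite lecE => /andP[].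
- exact: r0'.
- move=> _ [k _ <-]; have := Hr (- k); rewrite scaleNr opprK lecE => /andP[].
  done.
move=> F [FD FZ Fc2 FM Fp].
have FN x : F (- x) = - F x.
  by have := FZ (-1) x; rewrite rmorphN rmorph1 scaleN1r mulN1r.
have Fk k x : F (k *: x) = Re k * F x + Im k * F ('i *: x).
  have -> : k *: x = (Re k)%:C *: x + (Im k)%:C *: ('i *: x).
    by rewrite scalerA -scalerDl mulrC -complexE.
  by rewrite FD !FZ.
pose f x := (F x)%:C - 'i * (F ('i *: x))%:C.
have ReF x : Re (f x) = F x.
  by rewrite /f ReD ReN ReM Rei Imi ReC ImC !mul0r !mul1r subr0 oppr0 addr0.
have fD x y : f (x + y) = f x + f y.
  by rewrite /f scalerDr !FD !rmorphD mulrDr opprD addrACA.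
have fZ k x : f (k *: x) = k * f x.
  rewrite /f scalerA (Fk k x) (Fk ('i * k) x).
  case: k => kr ki.
  apply: cplx_eq.
    by rewrite !(ReD, ImD, ReN, ImN, ReM, ImM, ReC, ImC, Rei, Imi) /= ?mul0r ?mul1r ?subr0 ?sub0r ?add0r ?mulr0; ring.
  by rewrite !(ReD, ImD, ReN, ImN, ReM, ImM, ReC, ImC, Rei, Imi) /= ?mul0r ?mul1r ?subr0 ?sub0r ?add0r ?mulr0; ring.
have lf : linear f by move=> a x y; rewrite fD fZ.
have [xs xsE] := mklin lf.
exists xs; split; [|split].
- move=> x; rewrite xsE; set z := f x.
  have key : `|z| ^+ 2 = f (z^*%C *: x) by rewrite fZ sqr_normc mulrC.
  have := Fp (z^*%C *: x); rewrite -ReF -key normrZ normcJ.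
  rewrite (ge0_real (normr_ge0 z)) (normX_real x).
  set n := Re `|z|; set m := Re `|x|.
  have n0 : 0 <= n by have := normr_ge0 z; rewrite lecE => /andP[].
  have m0 : 0 <= m by have := normr_ge0 x; rewrite lecE => /andP[].
  rewrite expr2 !ReM /= !mulr0 !subr0 => h.
  rewrite lecR; nra.
- rewrite xsE /f (FM c1) ?(FM ('i *: c1)); last 2 first.
    by exists 'i.
    by exists 1 => //; rewrite scale1r.
  by rewrite rmorph0 mulr0 subr0.
- rewrite xsE (ge0_real (ltW r0)); apply: le_trans (normc_ge_Re _).
  by rewrite ReF Fc2 ger0_norm.
Qed.
End CHB.
End ComplexPart.

Lemma near_oo (P : nat -> Prop) : (\forall n \near \oo, P n) -> exists N, forall n, (N <= n)%N -> P n.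
Proof. case=> N _ HN; exists N => n; apply: HN. Qed.

Lemma open_ball (K : numFieldType) (U : set K) x : open U -> U x ->
  exists2 e, 0 < e & forall z, `|x - z| < e -> U z.
Proof.
by rewrite openE => oU /oU /nbhs_normP [e e0 sub]; exists e => // z zx; apply: sub.
Qed.

Section Simple.
Context d (S : measurableType d).

Lemma simple_pre T (phi : S -> T) : simple_fun phi -> forall B, measurable (phi @^-1` B).
Proof.
move=> [fr mp] B.
have -> : phi @^-1` B = \bigcup_(x in range phi `&` B) phi @^-1` [set x].
  apply/seteqP; split => s.
    by move=> Bs; exists (phi s) => //; split => //; exists s.
  by case=> x [_ Bx] px; rewrite /preimage /= px.
apply: fin_bigcup_measurable; first exact: sub_finite_set fr.
by move=> x _; apply: mp.
Qed.

Lemma simple_comp T U (phi : S -> T) (h : T -> U) : simple_fun phi -> simple_fun (h \o phi).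
Proof.
move=> sp; rewrite /simple_fun; split => [|x]; last exact: (simple_pre sp (h @^-1` [set x])).
have -> : range (h \o phi) = h @` range phi.
  by apply/seteqP; split => [_ [s _ <-]|_ [_ [s _ <-] <-]]; [exists (phi s) => //; exists s|exists s].
by apply: finite_image; case: sp.
Qed.

Lemma simple_pair T U (phi : S -> T) (psi : S -> U) :
  simple_fun phi -> simple_fun psi -> simple_fun (fun s => (phi s, psi s)).
Proof.
move=> [f1 m1] [f2 m2]; rewrite /simple_fun; split.
  apply: sub_finite_set (finite_setX f1 f2) => _ [s _ <-]; split; exists s => //.
move=> [a b].
have -> : (fun s => (phi s, psi s)) @^-1` [set (a, b)] = phi @^-1` [set a] `&` psi @^-1` [set b].
  apply/seteqP; split => s /=; first by case=> -> ->.
  by case => -> ->.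
exact: measurableI.
Qed.

Lemma simple_op T U V (phi : S -> T) (psi : S -> U) (op : T -> U -> V) :
  simple_fun phi -> simple_fun psi -> simple_fun (fun s => op (phi s) (psi s)).
Proof.
move=> s1 s2; have := simple_comp (fun p => op p.1 p.2) (simple_pair s1 s2).
by [].
Qed.
End Simple.

Section Gen.
Variables (R : realType) (K : numFieldType) (emb : {rmorphism R -> K}) (re : K -> R).
Hypothesis emb_le : forall a b, (emb a <= emb b) = (a <= b).
Hypothesis emb_re : forall x : K, 0 <= x -> emb (re x) = x.
Variable X : normedModType K.
Hypothesis hbp : HBP X.

Lemma emb_lt a b : (emb a < emb b) = (a < b).
Proof. by rewrite !lt_def emb_le (inj_eq (fmorph_inj _)). Qed.

Definition N (x : X) := re `|x|.
Lemma NE x : `|x| = emb (N x). Proof. by rewrite emb_re. Qed.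
Definition A (k : K) := re `|k|.
Lemma AE k : `|k| = emb (A k). Proof. by rewrite emb_re. Qed.
Lemma N_ge0 x : 0 <= N x.
Proof. by rewrite -emb_le rmorph0 -NE. Qed.
Lemma A_ge0 k : 0 <= A k.
Proof. by rewrite -emb_le rmorph0 -AE. Qed.
Lemma ND x y : N (x + y) <= N x + N y.
Proof. by rewrite -emb_le rmorphD -!NE ler_normD. Qed.
Lemma NZ k x : N (k *: x) = A k * N x.
Proof. by apply: (fmorph_inj emb); rewrite rmorphM -!NE -AE normrZ. Qed.
Lemma NB x y : N (x - y) = N (y - x).
Proof. by rewrite /N distrC. Qed.
Lemma NN x : N (- x) = N x.
Proof. by rewrite /N normrN. Qed.
Lemma N_gt0 x : x != 0 -> 0 < N x.
Proof. by move=> x0; rewrite -emb_lt rmorph0 -NE normr_gt0. Qed.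
Lemma A_gt0 k : k != 0 -> 0 < A k.
Proof. by move=> x0; rewrite -emb_lt rmorph0 -AE normr_gt0. Qed.
Lemma AM a b : A (a * b) = A a * A b.
Proof. by apply: (fmorph_inj emb); rewrite rmorphM -!AE normrM. Qed.
Lemma AD a b : A (a + b) <= A a + A b.
Proof. by rewrite -emb_le rmorphD -!AE ler_normD. Qed.

Lemma archR (e : R) : 0 < e -> exists m : nat, (m.+1%:R)^-1 < e.
Proof.
move=> e0; exists (Num.Def.archi_bound e^-1).
have e0' : 0 <= e^-1 by rewrite invr_ge0 ltW.
have h := archi_boundP e0'.
set m := Num.Def.archi_bound _ in h *.
have h2 : e^-1 < m.+1%:R by apply: lt_trans h _; rewrite ltr_nat.
rewrite -[e]invrK ltf_pV2 ?posrE ?invr_gt0 //.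
Qed.

Definition rho (n : nat) : R := (n.+1%:R)^-1.
Lemma rho_gt0 n : 0 < rho n. Proof. by rewrite invr_gt0. Qed.

Definition cond (c1 c2 : X) n := forall k : K, emb (rho n) <= `|c2 - k *: c1|.

Lemma Fam_ex (c1 c2 : X) n : exists xs : {linear X -> K},
  (forall x, `|xs x| <= `|x|) /\ (cond c1 c2 n -> xs c1 = 0 /\ emb (rho n) <= `|xs c2|).
Proof.
have [C|nC] := pselect (cond c1 c2 n).
  have r0 : 0 < emb (rho n) by rewrite -(rmorph0 emb) emb_lt rho_gt0.
  have [xs [h1 [h2 h3]]] := hbp r0 C.
  by exists xs; split.
have lz : linear (fun _ : X => 0 : K) by move=> a x y; rewrite scaler0 addr0.
have [xs xsE] := mklin lz.
by exists xs; split => // x; rewrite xsE normr0.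
Qed.

Definition Fam c1 c2 n : {linear X -> K} := projT1 (cid (Fam_ex c1 c2 n)).
Lemma FamB c1 c2 n x : `|Fam c1 c2 n x| <= `|x|.
Proof. by case: (projT2 (cid (Fam_ex c1 c2 n))) => h _; apply: h. Qed.
Lemma FamP c1 c2 n : cond c1 c2 n ->
  Fam c1 c2 n c1 = 0 /\ emb (rho n) <= `|Fam c1 c2 n c2|.
Proof. by case: (projT2 (cid (Fam_ex c1 c2 n))) => _ h; apply: h. Qed.

Definition approx (D : set X) (z : X) := forall e, 0 < e -> exists c, D c /\ N (z - c) < e.

Lemma linB (y : {linear X -> K}) (yB : forall x, `|y x| <= `|x|) x :
  A (y x) <= N x.
Proof. by rewrite -emb_le -AE -NE. Qed.

Lemma Fam_nz (D : set X) (z : X) : approx D z -> z != 0 ->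
  exists c n, D c /\ Fam 0 c n z != 0.
Proof.
move=> Dz z0; have nz := N_gt0 z0.
have [n hn] := archR (divr_gt0 nz (ltr0n _ 2)).
rewrite -/(rho n) in hn.
have r0 := rho_gt0 n.
have [c [Dc hc]] := Dz _ (divr_gt0 r0 (ltr0n _ 2)).
exists c, n; split => //; apply/eqP => Fz.
have C : cond 0 c n.
  move=> k; rewrite scaler0 subr0 NE emb_le.
  have := ND (z - c) c; rewrite subrK; lra.
have [_ h] := FamP C.
have := linB (@FamB 0 c n) (c - z).
rewrite linearB /= Fz subr0 NB.
move: h; rewrite AE emb_le; lra.
Qed.

Lemma pw_ratio (D : set X) u v (Du : approx D u) (Dv : approx D v)
  (H : forall c1 c2 n, D c1 -> D c2 -> `|Fam c1 c2 n v| <= `|Fam c1 c2 n u|)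
  (y : {linear X -> K}) (yB : forall x, `|y x| <= `|x|) (yu : y u != 0) :
  v = (y v / y u) *: u.
Proof.
set a := y v / y u.
apply/eqP; rewrite -subr_eq0; apply/negPn/negP => w0.
set w := v - a *: u in w0.
have yva : y v = a * y u by rewrite /a mulfVK.
set g := A (y u).
have g0 : 0 < g by exact: A_gt0.
set nu := N u; set nv := N v; set nw := N w.
have gnu : g <= nu by exact: linB.
have nu0 : 0 < nu by exact: lt_le_trans g0 gnu.
have nw0 : 0 < nw by exact: N_gt0.
have nv0 : 0 <= nv by exact: N_ge0.
set q := g / nu.
have hq : q * nu = g by rewrite /q mulfVK // gt_eqF.
have q0 : 0 <= q by rewrite divr_ge0 // ltW.
have q1 : q <= 1 by rewrite ler_pdivrMr // mul1r.
set beta := q * nw / 2.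
have beta0 : 0 < beta by rewrite divr_gt0 // mulr_gt0 // /q divr_gt0.
have claim1 k : beta <= N (v - k *: u).
  set d := A (a - k).
  have d0 : 0 <= d by exact: A_ge0.
  have h1 : d * g <= N (v - k *: u).
    have := linB yB (v - k *: u).
    by rewrite linearB linearZ /= yva -mulrBl AM.
  have h2 : nw <= N (v - k *: u) + d * nu.
    rewrite /nw; have -> : w = (v - k *: u) + (- ((a - k) *: u)).
      by rewrite /w scalerBl opprB addrA subrK.
    by apply: le_trans (ND _ _) _; rewrite NN NZ.
  have [hd|hd] := leP (nw / 2) (d * nu).
    have : q * (nw / 2) <= q * (d * nu) by rewrite ler_wpM2l.
    rewrite /beta; move: hq; nra.
  rewrite /beta; nra.
have [n hn] := archR (divr_gt0 beta0 (ltr0n _ 2)).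
rewrite -/(rho n) in hn.
have r0 := rho_gt0 n.
set L := 2 * (nv + 1 + beta) / nu.
have hL : L * nu = 2 * (nv + 1 + beta) by rewrite /L mulfVK // gt_eqF.
have L0 : 0 <= L by rewrite /L divr_ge0 // ?ltW //; lra.
set eps := Num.min (rho n / 2) (Num.min (nu / 2) (Num.min 1 (beta / (2 * (1 + L))))).
have e0 : 0 < eps.
  rewrite /eps !lt_min !divr_gt0 ?ltr01 //; last lra.
  by rewrite mulr_gt0 // /q divr_gt0.
have e1 : eps <= rho n / 2 by rewrite /eps ge_min lexx.
have e2 : eps <= nu / 2 by rewrite /eps !ge_min lexx orbT.
have e3 : eps <= 1 by rewrite /eps !ge_min lexx !orbT.
have e4 : eps <= beta / (2 * (1 + L)) by rewrite /eps !ge_min lexx !orbT.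
have e4' : eps * (1 + L) <= beta / 2.
  move: e4; rewrite ler_pdivlMr; last lra.
  by move=> h; rewrite ler_pdivlMr //; lra.
have [c1 [Dc1 hc1]] := Du _ e0.
have [c2 [Dc2 hc2]] := Dv _ e0.
have C : cond c1 c2 n.
  move=> k; rewrite NE emb_le.
  set kk := A k.
  have kk0 : 0 <= kk by exact: A_ge0.
  set M := N (c2 - k *: c1).
  have g1 : N (v - k *: u) <= M + N (v - c2) + kk * N (u - c1).
    have E (p1 p2 p3 p4 : X) : p1 - p4 = (p2 - p3) + (p1 - p2) + (p3 - p4).
      by rewrite [_ - p3 + _]addrC !addrA !subrK.
    rewrite (E v c2 (k *: c1) (k *: u)) -scalerBr.
    apply: le_trans (ND _ _) _; rewrite NZ NB lerD2r.
    exact: ND.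
  have g2 : kk * N c1 <= M + N c2.
    rewrite -NZ; have -> : k *: c1 = c2 + (- (c2 - k *: c1)) by rewrite opprB addrC subrK.
    by apply: le_trans (ND _ _) _; rewrite NN addrC.
  have g3 : nu <= N (u - c1) + N c1.
    by rewrite /nu -{1}(subrK c1 u); exact: ND.
  have g4 : N c2 <= nv + N (v - c2).
    by have := ND v (- (v - c2)); rewrite NN opprB addrC subrK.
  have := claim1 k.
  have [hk|hk] := leP kk L.
    have : kk * eps <= L * eps by rewrite ler_wpM2r // ltW.
    have : kk * N (u - c1) <= kk * eps by rewrite ler_wpM2l // ltW.
    lra.
  have hc1' : nu / 2 <= N c1 by lra.
  have : kk * (nu / 2) <= kk * N c1 by rewrite ler_wpM2l.
  have : L * (nu / 2) <= kk * (nu / 2).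
    by apply: ler_wpM2r; [rewrite divr_ge0 // ltW | exact: ltW].
  move: hL; nra.
have [Fc1 hF] := FamP C.
set F := Fam c1 c2 n in Fc1 hF.
have hu : A (F u) <= N (u - c1).
  by have := linB (@FamB c1 c2 n) (u - c1); rewrite linearB /= Fc1 subr0.
have hv : A (F c2) <= A (F v) + N (c2 - v).
  have -> : F c2 = F v + F (c2 - v) by rewrite linearB /= addrC subrK.
  apply: le_trans (AD _ _) _; rewrite lerD2l; exact: linB (@FamB c1 c2 n) _.
have hH : A (F v) <= A (F u) by rewrite -emb_le -!AE; exact: H.
move: hF; rewrite AE emb_le NB in hv *; lra.
Qed.

Section Meas.
Context d (S : measurableType d).

Lemma lim_meas (phi : nat -> S -> K) (h : S -> K) (D : set S) : measurable D ->
  (forall n, simple_fun (phi n)) ->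
  (forall s, D s -> (fun n => phi n s) @ \oo --> h s) ->
  forall U, open U -> measurable (D `&` h @^-1` U).
Proof.
move=> mD sphi cv U oU.
pose W m := [set y : K | forall z, `|y - z| < emb (rho m) -> U z].
pose E := \bigcup_m \bigcup_N0 \bigcap_n (phi (n + N0)%N @^-1` W m).
have -> : D `&` h @^-1` U = D `&` E.
  apply/seteqP; split => s [Ds hs]; split => //.
  - have [e e0 he] := open_ball oU hs.
    have e0' : 0 < re e by rewrite -emb_lt rmorph0 emb_re // ltW.
    have [m hm] := archR (divr_gt0 e0' (ltr0n _ 2)); rewrite -/(rho m) in hm.
    have rm0 : 0 < emb (rho m) by rewrite -(rmorph0 emb) emb_lt rho_gt0.
    have [N0 HN] := near_oo (cvgr_dist_lt _ _ (cv s Ds) _ rm0).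
    exists m => //; exists N0 => // n _ z hz.
    apply: he.
    have h1 := HN (n + N0)%N (leq_addl _ _).
    rewrite AE emb_lt in h1; rewrite AE emb_lt in hz.
    rewrite -(emb_re (ltW e0)) AE emb_lt.
    have := AD (h s - phi (n + N0)%N s) (phi (n + N0)%N s - z).
    rewrite addrA subrK; lra.
  - case: hs => m _ [N0 _ hN].
    have rm0 : 0 < emb (rho m) by rewrite -(rmorph0 emb) emb_lt rho_gt0.
    have [N1 HN] := near_oo (cvgr_dist_lt _ _ (cv s Ds) _ rm0).
    apply: (hN N1 I); rewrite distrC; apply: HN; exact: leq_addr.
apply: measurableI => //.
apply: bigcupT_measurable => m; apply: bigcupT_measurable => N0.
apply: bigcapT_measurable => n; exact: simple_pre.
Qed.

Lemma lin_cont (y : {linear X -> K}) : (forall x, `|y x| <= `|x|) -> continuous y.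
Proof.
move=> yB x; apply/cvgrPdist_lt => e e0; apply/nbhs_normP; exists e => // z /= hz.
by rewrite -linearB; apply: le_lt_trans (yB _) hz.
Qed.

Lemma open_nz : open [set x : K | x != 0].
Proof.
rewrite openE => x /= x0; apply/nbhs_normP; exists `|x|.
  by rewrite /= normr_gt0.
move=> z /= hz; apply/negP => /eqP z0; move: hz; rewrite z0 subr0 ltxx.
by [].
Qed.

Definition dec2 (j : nat) : nat * nat := odflt (0, 0)%N (unpickle j).
Definition dec3 (j : nat) : nat * nat * nat := odflt (0, 0, 0)%N (unpickle j).

Variable mu : {measure set S -> \bar R}.

Theorem gen_main (f g : S -> X) :
  strongly_measurable f -> strongly_measurable g ->
  (forall xs : {linear X -> K}, continuous xs ->
     {ae mu, forall s, `|xs (g s)| <= `|xs (f s)|}) ->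
  exists a : S -> K,
    borel_measurable a /\
    {ae mu, forall s, `|a s| <= 1} /\
    {ae mu, forall s, g s = a s *: f s}.
Proof.
move=> [phi [sphi cphi]] [psi [spsi cpsi]] Hyp.
have lex (h : S -> X) : simple_fun h -> {l : seq X | range h = [set` l]}.
  by move=> [fr _]; apply: cid; apply/finite_seqP.
pose L n := projT1 (lex _ (sphi n)) ++ projT1 (lex _ (spsi n)).
pose cs j := nth 0 (L (dec2 j).1) (dec2 j).2.
pose D := range cs.
have DL n x : x \in L n -> D x.
  move=> xL; exists (pickle (n, index x (L n))) => //.
  by rewrite /cs /dec2 pickleK /= nth_index.
have D0 : D 0.
  exists (pickle (0%N, size (L 0%N))) => //.
  by rewrite /cs /dec2 pickleK /= nth_default.
have Dphi n s : D (phi n s).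
  apply: (DL n); rewrite mem_cat; apply/orP; left.
  have E := projT2 (lex _ (sphi n)).
  have : [set` projT1 (lex _ (sphi n))] (phi n s) by rewrite -E; exists s.
  by [].
have Dpsi n s : D (psi n s).
  apply: (DL n); rewrite mem_cat; apply/orP; right.
  have E := projT2 (lex _ (spsi n)).
  have : [set` projT1 (lex _ (spsi n))] (psi n s) by rewrite -E; exists s.
  by [].
have apf s : approx D (f s).
  move=> e e0; have e0' : 0 < emb e by rewrite -(rmorph0 emb) emb_lt.
  have [N1 HN] := near_oo (cvgr_dist_lt _ _ (cphi s) _ e0').
  exists (phi N1 s); split; first exact: Dphi.
  by rewrite -emb_lt -NE; exact: HN.
have apg s : approx D (g s).
  move=> e e0; have e0' : 0 < emb e by rewrite -(rmorph0 emb) emb_lt.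
  have [N1 HN] := near_oo (cvgr_dist_lt _ _ (cpsi s) _ e0').
  exists (psi N1 s); split; first exact: Dpsi.
  by rewrite -emb_lt -NE; exact: HN.
pose G j := Fam (cs (dec3 j).1.1) (cs (dec3 j).1.2) (dec3 j).2.
have GB j x : `|G j x| <= `|x| by exact: FamB.
have Gall c1 c2 n : D c1 -> D c2 -> exists j, G j = Fam c1 c2 n.
  move=> [j1 _ <-] [j2 _ <-]; exists (pickle (j1, j2, n)).
  by rewrite /G /dec3 pickleK.
have Gcont j : continuous (G j) by exact: lin_cont.
have [N0 [mN0 muN0 hN0]] : exists N0, [/\ measurable N0, mu N0 = 0 &
    (forall s, ~ N0 s -> forall j, `|G j (g s)| <= `|G j (f s)|)].
  have := @ae_foralln _ _ _ mu (fun j s => `|G j (g s)| <= `|G j (f s)|)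
    (fun j => Hyp (G j) (Gcont j)).
  case=> N0 [mN0 muN0 sub]; exists N0; split => // s ns.
  by apply: contrapT => /sub.
have H s : ~ N0 s -> forall c1 c2 n, D c1 -> D c2 ->
    `|Fam c1 c2 n (g s)| <= `|Fam c1 c2 n (f s)|.
  move=> ns c1 c2 n D1 D2; have [j Ej] := Gall c1 c2 n D1 D2.
  by have := hN0 s ns j; rewrite Ej.
pose q j s := G j (g s) / G j (f s).
pose Dj j := [set s | G j (f s) != 0].
pose jsel s := xget 0%N [set j | G j (f s) != 0].
pose a s := if `[< N0 s >] then 0 else q (jsel s) s.
have F1 s j : ~ N0 s -> G j (f s) != 0 -> g s = q j s *: f s.
  move=> ns nz; apply: (pw_ratio (apf s) (apg s) (H s ns)) => //.
have F3 s : ~ N0 s -> (forall j, G j (f s) = 0) -> f s = 0 /\ g s = 0.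
  move=> ns all0.
  have f0 : f s = 0.
    apply/eqP; apply: contrapT => /negP fs0.
    have [c [n [Dc /negP]]] := Fam_nz (apf s) fs0; apply.
    by have [j Ej] := Gall _ _ n D0 Dc; have := all0 j; rewrite Ej => ->.
  split => //; apply/eqP; apply: contrapT => /negP gs0.
  have [c [n [Dc /negP]]] := Fam_nz (apg s) gs0; apply.
  rewrite -normr_eq0 eq_le normr_ge0 andbT; apply: le_trans (H s ns _ _ n D0 Dc) _.
  by rewrite f0 linear0 normr0.
have Fa s : ~ N0 s -> g s = a s *: f s /\ `|a s| <= 1.
  move=> ns; rewrite /a asboolF //.
  have [ex|nex] := pselect (exists j, G j (f s) != 0).
    have nz : G (jsel s) (f s) != 0 by exact: (xgetPex 0%N ex).
    split; first exact: F1.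
    rewrite /q normrM normrV ?unitfE // ler_pdivrMr ?normr_gt0 // mul1r.
    exact: hN0.
  have all0 j : G j (f s) = 0.
    by apply/eqP; apply: contrapT => /negP nz; apply: nex; exists j.
  have [f0 g0] := F3 s ns all0.
  by rewrite /q f0 g0 !linear0 mul0r normr0 ler01.
have Fq s j : ~ N0 s -> G j (f s) != 0 -> a s = q j s.
  move=> ns nz.
  have fs0 : f s != 0 by apply: contraNneq nz => ->; rewrite linear0.
  apply/eqP; rewrite -subr_eq0.
  have : (a s - q j s) *: f s = 0 by rewrite scalerBl -F1 // -(Fa s ns).1 subrr.
  by move/eqP; rewrite scaler_eq0 (negbTE fs0) orbF.
exists a; split; last split.
- move=> U oU.
  pose Z := [set _ : S | U 0].
  have mZ : measurable Z.
    have [U0|nU0] := pselect (U 0).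
      by rewrite (_ : Z = setT) //; apply/seteqP; split.
    by rewrite (_ : Z = set0) //; apply/seteqP; split.
  have mDj j : measurable (Dj j).
    have -> : Dj j = setT `&` (G j \o f) @^-1` [set x | x != 0] by rewrite setTI.
    apply: (@lim_meas (fun n => G j \o phi n)) => //.
    - by move=> n; exact: simple_comp.
    - by move=> s _; exact: (continuous_cvg _ (Gcont j (f s)) (cphi s)).
    - exact: open_nz.
  have mq j : measurable (Dj j `&` q j @^-1` U).
    apply: (@lim_meas (fun n s => G j (psi n s) / G j (phi n s))) => //.
    - by move=> n; exact: (simple_op (fun x y => G j x / G j y) (spsi n) (sphi n)).
    - move=> s nz; apply: cvgM.
        exact: (continuous_cvg _ (Gcont j (g s)) (cpsi s)).
      exact: (cvgV nz (continuous_cvg _ (Gcont j (f s)) (cphi s))).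
  have -> : a @^-1` U = (N0 `&` Z) `|`
      (\bigcup_j (~` N0 `&` (Dj j `&` q j @^-1` U))) `|`
      (~` N0 `&` (\bigcap_j ~` Dj j) `&` Z).
    apply/seteqP; split => s.
    + move=> Uas; have [N0s|ns] := pselect (N0 s).
        by left; left; split => //; move: Uas; rewrite /a /preimage /= asboolT.
      have [[j nz]|nex] := pselect (exists j, G j (f s) != 0).
        left; right; exists j => //; split => //; split => //.
        by rewrite /preimage /= -(Fq s j ns nz).
      have Z0 : U 0.
        move: Uas; rewrite /a /preimage /= asboolF // /q.
        have -> : G (jsel s) (f s) = 0.
          by apply/eqP; apply: contrapT => /negP nz; apply: nex; exists (jsel s).
        by rewrite invr0 mulr0.
      right; split => //; split => // j _ nz.
      exact: (nex (ex_intro _ j nz)).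
    + case=> [[[N0s Zs]|[j _ [ns [nz Uq]]]]|[[ns nj] Zs]].
      * by rewrite /preimage /= /a asboolT.
      * by rewrite /preimage /= (Fq s j ns nz).
      * rewrite /preimage /= /a asboolF // /q.
        have -> : G (jsel s) (f s) = 0.
          by apply/eqP; apply: contrapT => /negP nz; exact: (nj (jsel s) I).
        by rewrite invr0 mulr0.
  apply: measurableU; first apply: measurableU.
  + exact: measurableI.
  + by apply: bigcupT_measurable => j; apply: measurableI => //; exact: measurableC.
  + apply: measurableI => //; apply: measurableI; first exact: measurableC.
    by apply: bigcapT_measurable => j; exact: measurableC.
- exists N0; split => // s /= nas; apply: contrapT => ns; apply: nas.
  exact: (Fa s ns).2.
- exists N0; split => // s /= nas; apply: contrapT => ns; apply: nas.
  exact: (Fa s ns).1.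
Qed.
End Meas.
End Gen.

Theorem mainTheorem3 (R : realType) (c : scalar_field)
  (X : completeNormedModType (Kof R c))
  (d : measure_display) (S : measurableType d) (mu : {measure set S -> \bar R})
  (f g : S -> X) :
  strongly_measurable f -> strongly_measurable g ->
  (forall xs : {linear X -> Kof R c}, continuous xs ->
     {ae mu, forall s, `|xs (g s)| <= `|xs (f s)|}) ->
  exists a : S -> Kof R c,
    borel_measurable a /\
    {ae mu, forall s, `|a s| <= 1} /\
    {ae mu, forall s, g s = a s *: f s}.
Proof.
case: c X f g => X f g.
- apply: (@gen_main R R idfun id) => //.
  exact: HBP_real.
- apply: (@gen_main R R[i] (real_complex R) (@complex.Re R)).
  + by move=> a b; rewrite lecR.
  + by move=> x x0; exact: (esym (ge0_real x0)).
  + exact: HBP_complex.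
Qed.
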